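(* Let $\mathbb{K}$ be any field and $G=UU_n(\mathbb{K})$ the group of $n\times n$ upper triangular unipotent matrices over $\mathbb{K}$. If $x=(x_{ij})\in G$ satisfies $\prod_{i=1}^{n-1}x_{i,i+1}\ne 0$, then the centralizer $C_G(x)$ is abelian. *)

(* Defs.v *)
From HB Require Import structures.
From mathcomp Require Import all_boot all_order all_algebra.
Set Implicit Arguments. Unset Strict Implicit. Unset Printing Implicit Defensive.
Import GRing.Theory.
Local Open Scope ring_scope.

Definition unitriangular (K : fieldType) (n : nat) (A : 'M[K]_n) : Prop :=
  (forall i j : 'I_n, (j < i)%N -> A i j = 0) /\ (forall i : 'I_n, A i i = 1).

Definition in_centralizer_UU (K : fieldType) (n : nat) (x g : 'M[K]_n) : Prop :=
  unitriangular g /\ g *m x = x *m g.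

(* \prod_{i=1}^{n-1} x_{i,i+1}, written with 0-based ordinal indices. *)
Definition superdiag_prod (K : fieldType) (n : nat) (x : 'M[K]_n) : K :=
  \prod_(i : 'I_n) \prod_(j : 'I_n | nat_of_ord j == i.+1) x i j.

(* Main.v *)
Require Import Defs.
From HB Require Import structures.
From mathcomp Require Import all_boot all_order all_algebra.
Local Open Scope ring_scope.
Import GRing.Theory.

Lemma horner_poly_expand (K : fieldType) (m : nat) (N : 'M[K]_m.+1) (c : nat -> K) :
  horner_mx N (\poly_(k < m.+1) c k) = \sum_(k < m.+1) c k *: N ^+ k.
Proof.
rewrite poly_def rmorph_sum; apply: eq_bigr => k _.
by rewrite -mul_polyC rmorphM /= horner_mx_C rmorphXn /= horner_mx_X -mulmxE mul_scalar_mx.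
Qed.

Lemma powN (K : fieldType) (m : nat) (N : 'M[K]_m.+1) :
  (forall i j : 'I_m.+1, (j <= i)%N -> N i j = 0) ->
  (forall i j : 'I_m.+1, nat_of_ord j = i.+1 -> N i j != 0) ->
  forall k, (forall j : 'I_m.+1, (j < k)%N -> (N ^+ k) 0 j = 0) /\
            (forall j : 'I_m.+1, nat_of_ord j = k -> (N ^+ k) 0 j != 0).
Proof.
move=> hlow hsup; elim=> [|k [IH1 IH2]].
  split=> j //= j0; rewrite expr0 mxE.
  have -> : j = 0 by apply: val_inj.
  by rewrite eqxx oner_neq0.
split=> j hj.
  rewrite exprSr -mulmxE mxE big1 // => l _.
  have [lk|kl] := ltnP l k; first by rewrite IH1 // mul0r.
  by rewrite hlow ?mulr0 //; apply: leq_trans kl; rewrite -ltnS.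
have kn : (k < m.+1)%N by apply: leq_trans (ltn_ord j); rewrite hj.
rewrite exprSr -mulmxE mxE (bigD1 (Ordinal kn)) //= big1 ?addr0.
  by apply: mulf_neq0; [apply: IH2 | apply: hsup].
move=> l /eqP hl.
have [lk|kl] := ltnP l k; first by rewrite IH1 // mul0r.
rewrite hlow ?mulr0 // hj.
have : nat_of_ord l != k by apply/eqP => e; apply: hl; apply/val_inj.
by rewrite neq_ltn ltnNge kl /=.
Qed.

Theorem theorem11p1 (K : fieldType) (n : nat) (x : 'M[K]_n) :
  unitriangular x ->
  superdiag_prod x != 0 ->
  forall g h : 'M[K]_n,
    in_centralizer_UU x g -> in_centralizer_UU x h ->
    g *m h = h *m g.
Proof.
case: n x => [|m] x [xlow xdiag] hprod g h [_ hg] [_ hh].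
  by apply/matrixP => i; case: i.
pose N := x - 1.
have hlow : forall i j : 'I_m.+1, (j <= i)%N -> N i j = 0.
  move=> i j; rewrite leq_eqVlt => /orP [/eqP e|lt].
    have -> : j = i by apply/val_inj.
    by rewrite !mxE xdiag eqxx subrr.
  rewrite !mxE; have -> : (i == j) = false by rewrite -(inj_eq val_inj) /= gtn_eqF.
  by rewrite xlow // subr0.
have hsup : forall i j : 'I_m.+1, nat_of_ord j = i.+1 -> N i j != 0.
  move=> i j hj; rewrite !mxE.
  have -> : (i == j) = false by apply/negbTE; rewrite -(inj_eq val_inj) /= hj neq_ltn ltnSn.
  rewrite subr0.
  move: hprod; rewrite /superdiag_prod prodf_seq_neq0 => /allP /(_ i (mem_index_enum _)) /=.
  rewrite prodf_seq_neq0 => /allP /(_ j (mem_index_enum _)) /=.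
  by rewrite hj eqxx.
have PN := @powN K m N hlow hsup.
pose B := \matrix_(k < m.+1, j < m.+1) (N ^+ k) 0 j.
have rowB : forall k, row k B = row 0 (N ^+ k).
  by move=> k; apply/rowP => j; rewrite !mxE.
have Bunit : B \in unitmx.
  rewrite unitmxE unitfE -det_tr det_trig.
    rewrite prodf_seq_neq0; apply/allP => i _ /=; rewrite !mxE.
    by apply: (proj2 (PN i)).
  by apply/is_trig_mxP => i j ij; rewrite !mxE; apply: (proj1 (PN j)).
have key : forall A : 'M[K]_m.+1, A *m N = N *m A ->
    exists p, A = horner_mx N p.
  move=> A hA.
  have [w hw] : exists w, row 0 A = w *m B.
    by apply/submxP/submx_full; rewrite row_full_unit.
  exists (\poly_(k < m.+1) w 0 (inord k)).
  set P := horner_mx _ _.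
  have cA : forall k, A *m N ^+ k = N ^+ k *m A.
    move=> k; rewrite mulmxE; apply: commrX; rewrite /GRing.comm -!mulmxE //.
  have cP : forall k, P *m N ^+ k = N ^+ k *m P.
    move=> k; rewrite mulmxE; apply: commrX.
    by rewrite /GRing.comm -!mulmxE; apply/comm_horner_mx; rewrite /comm_mx.
  have r0P : row 0 P = w *m B.
    rewrite /P horner_poly_expand mulmx_sum_row raddf_sum; apply: eq_bigr => k _.
    by rewrite inord_val; apply/rowP => j; rewrite !mxE.
  rewrite -(mulKmx Bunit A) -(mulKmx Bunit P); congr (_ *m _).
  apply/row_matrixP => k; rewrite !row_mul rowB -!row_mul -cA -cP.
  by rewrite !row_mul hw r0P.
have gN : g *m N = N *m g by rewrite mulmxBr mulmxBl hg mulmx1 mul1mx.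
have hN : h *m N = N *m h by rewrite mulmxBr mulmxBl hh mulmx1 mul1mx.
have [p ->] := key g gN; have [q ->] := key h hN.
by rewrite mulmxE comm_horner_mx2.
Qed.
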